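(* Let $G$ be a connected graph of order $n\ge 3$. Then $\Gamma_{\rm cer}(G)=n-2$ if and only if $G$ is a simple diadem, a diadem, or one of the graphs $K_2+\overline{K}_{n-2}$ and $\overline{K}_2+\overline{K}_{n-2}$.
   Context: All graphs are finite and simple. A set $D\subseteq V_G$ is a dominating set of $G$ if every vertex of $V_G-D$ has a neighbor in $D$. A set $D$ is a certified dominating set of $G$ if $D$ is dominating and every vertex of $D$ has either zero or at least two neighbors in $V_G-D$; it is minimal if no proper subset is a certified dominating set. $\Gamma_{\rm cer}(G)$ is the maximum cardinality of a minimal certified dominating set. A graph is a corona if it equals $H\circ K_1$ for some graph $H$ (attach one new pendant vertex to each vertex of $H$); in a corona, a leaf is a vertex of degree one and a support is a vertex adjacent to a leaf. A simple diadem is a graph obtained from a corona by adding one new vertex and joining it to exactly one support of the corona. A diadem is a graph obtained from a corona by adding one new vertex and joining it to exactly one leaf and to the neighbor of that leaf. $F+H$ denotes the join of $F$ and $H$ (disjoint union plus all edges between them), and $\overline{K}_m$ is the edgeless graph on $m$ vertices. *)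

(* Defs.v *)
From mathcomp Require Import all_boot.
Set Implicit Arguments. Unset Strict Implicit. Unset Printing Implicit Defensive.

Section Cer.
Variables (T : finType) (g : rel T).

Definition dominating (D : {set T}) : bool :=
  [forall v, (v \notin D) ==> [exists u in D, g v u]].

Definition ext_nbrs (D : {set T}) (v : T) : {set T} := [set u | g v u & u \notin D].

Definition certified_dominating (D : {set T}) : bool :=
  dominating D && [forall v in D, #|ext_nbrs D v| != 1].

Definition minimal_certified_dominating (D : {set T}) : bool :=
  certified_dominating D &&
  [forall D' : {set T}, (D' \proper D) ==> ~~ certified_dominating D'].

(* upper certified domination number: max cardinality of a minimal certified dominating set
   (the family is nonempty since V_G itself is certified dominating) *)
Definition Gamma_cer : nat :=
  \max_(D : {set T} | minimal_certified_dominating D) #|D|.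
End Cer.

Definition simple_graph (T : finType) (g : rel T) := symmetric g /\ irreflexive g.
Definition connected_graph (T : finType) (g : rel T) := forall x y, connect g x y.

Definition isomorphic (T1 T2 : finType) (g1 : rel T1) (g2 : rel T2) : Prop :=
  exists f : T1 -> T2, bijective f /\ forall x y, g1 x y = g2 (f x) (f y).

(* corona H o K1 of H on 'I_k: inl a = vertex a of H, inr a = pendant leaf attached to a *)
Definition corona (k : nat) (h : rel 'I_k) : rel ('I_k + 'I_k) :=
  fun x y => match x, y with
  | inl a, inl b => h a b
  | inl a, inr b => a == b
  | inr a, inl b => a == b
  | inr _, inr _ => false
  end.

(* simple diadem: new vertex None joined to the support inl s *)
Definition simple_diadem_rel (k : nat) (h : rel 'I_k) (s : 'I_k) :
  rel (option ('I_k + 'I_k)) :=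
  fun x y => match x, y with
  | None, None => false
  | None, Some (inl a) | Some (inl a), None => a == s
  | None, Some (inr _) | Some (inr _), None => false
  | Some u, Some v => corona h u v
  end.

(* diadem: new vertex None joined to the leaf inr s and to its neighbour inl s *)
Definition diadem_rel (k : nat) (h : rel 'I_k) (s : 'I_k) :
  rel (option ('I_k + 'I_k)) :=
  fun x y => match x, y with
  | None, None => false
  | None, Some (inl a) | Some (inl a), None => a == s
  | None, Some (inr a) | Some (inr a), None => a == s
  | Some u, Some v => corona h u v
  end.

Definition is_simple_diadem (T : finType) (g : rel T) : Prop :=
  exists k (h : rel 'I_k) (s : 'I_k),
    simple_graph h /\ isomorphic g (simple_diadem_rel h s).

Definition is_diadem (T : finType) (g : rel T) : Prop :=
  exists k (h : rel 'I_k) (s : 'I_k),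
    simple_graph h /\ isomorphic g (diadem_rel h s).

(* K_2 + \overline{K}_m : inl side is K_2 (on bool), inr side is edgeless on 'I_m *)
Definition K2_join_barK (m : nat) : rel (bool + 'I_m) :=
  fun x y => match x, y with
  | inl a, inl b => a != b
  | inl _, inr _ | inr _, inl _ => true
  | inr _, inr _ => false
  end.

Definition barK2_join_barK (m : nat) : rel (bool + 'I_m) :=
  fun x y => match x, y with
  | inl _, inl _ => false
  | inl _, inr _ | inr _, inl _ => true
  | inr _, inr _ => false
  end.

(* Main.v *)
Require Import Defs.
From mathcomp Require Import all_boot zify.
Set Implicit Arguments. Unset Strict Implicit. Unset Printing Implicit Defensive.

Section Gen.
Variable T : finType.
Implicit Types A B : {set T}.

Lemma ne1_intro A : (forall u, u \in A -> exists2 w, w \in A & w != u) -> #|A| != 1.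
Proof.
move=> H; apply/negP => /cards1P [u Au].
have : u \in A by rewrite Au set11.
case/H => w; rewrite Au !inE => /eqP ->; rewrite eqxx.
done.
Qed.

Lemma ne1_elim A u : #|A| != 1 -> u \in A -> exists2 w, w \in A & w != u.
Proof.
move=> H uA; apply/exists_inP; rewrite -negb_forall_in; apply/negP => /forall_inP H2.
move/negP: H; apply; apply/cards1P; exists u; apply/setP => z; rewrite inE.
apply/idP/eqP => [zA|->//]; by move: (H2 z zA); case: eqP.
Qed.

End Gen.

Section Main.
Variables (T : finType) (g : rel T).
Hypothesis gsym : symmetric g.
Hypothesis girr : irreflexive g.
Implicit Types x y v u w s z : T.

Lemma inD x y v : (v \in ~: [set x; y]) = (v != x) && (v != y).
Proof. by rewrite !inE negb_or. Qed.

Lemma ext_D x y v : ext_nbrs g (~: [set x; y]) v = [set z in [set x; y] | g v z].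
Proof. by apply/setP => z; rewrite !inE negbK andbC. Qed.

Lemma cert_eq x y : x != y -> certified_dominating g (~:[set x;y]) ->
  forall v, v != x -> v != y -> g v x = g v y.
Proof.
move=> hxy /andP [_ /forall_inP H] v vx vy.
have := H v; rewrite inD vx vy ext_D => /(_ isT).
case gx: (g v x); case gy: (g v y) => //.
  suff -> : [set z in [set x; y] | g v z] = [set x] by rewrite cards1.
  apply/setP => z; rewrite !inE; case: eqP => [->|_]; rewrite ?gx //.
  by case: eqP => [->|]; rewrite ?gy.
suff -> : [set z in [set x; y] | g v z] = [set y] by rewrite cards1.
apply/setP => z; rewrite !inE; case: (eqVneq z y) => [->|_]; rewrite ?gy ?orbT //.
by case: eqP => [->|]; rewrite ?gx.
Qed.

Lemma cert_S x y : certified_dominating g (~:[set x;y]) ->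
  exists u, [/\ u != x, u != y & g x u].
Proof.
case/andP => /forallP /(_ x); rewrite inD eqxx /= => /exists_inP [u uD gu] _.
by exists u; move: uD; rewrite inD => /andP [-> ->].
Qed.

Lemma removable x y (hxy : x != y) :
  minimal_certified_dominating g (~:[set x;y]) -> forall X : {set T},
  X \subset ~:[set x;y] -> (exists v, v \in X) ->
  (exists s, [/\ s \in ~:[set x;y], g s x & s \notin X]) ->
  (forall v, v \in X -> exists u, [/\ u \in ~:[set x;y], u \notin X & g v u]) ->
  (forall w, w \in ~:[set x;y] -> w \notin X -> ~~ g w x -> forall u, u \in X -> g w u ->
     exists u', [/\ u' \in X, u' != u & g w u']) -> False.
Proof.
move=> /andP [Hc /forallP Hm] X XD [v vX] [s [sD sx sX]] HB HC.
have Heq := cert_eq hxy Hc.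
move: (Hm (~:[set x;y] :\: X)); rewrite properE subsetDl /=.
have -> : ~:[set x; y] \subset ~:[set x; y] :\: X = false.
  apply/negP => /subsetP /(_ v (subsetP XD v vX)); by rewrite inE vX.
rewrite /= => /negP; apply; apply/andP; split.
  apply/forallP => w; apply/implyP; rewrite !inE negb_and negbK.
  case/orP => [wX|wxy].
    by have [u [uD uX gu]] := HB w wX; apply/exists_inP; exists u; rewrite // inE uX.
  apply/exists_inP; exists s; first by rewrite inE sX.
  move: sD; rewrite inD => /andP [s1 s2].
  move: wxy; rewrite ?inE ?negb_and ?negbK.
  by case/orP => /eqP ->; rewrite gsym // -(Heq s).
apply/forall_inP => w; rewrite inE => /andP [wX wD].
move: (wD); rewrite inD => /andP [w1 w2].
case gwx: (g w x).
  apply: ne1_intro => u _; exists (if u == x then y else x).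
    case: eqP => _; rewrite /ext_nbrs !inE ?negb_and ?negbK ?eqxx ?orbT /=.
    all: rewrite /= ?andbT.
    rewrite -(Heq w w1 w2). exact: gwx. exact: gwx.
  by case: (eqVneq u x) => [->|ne]; rewrite ?eqxx ?(negbTE ne) eq_sym.
apply: ne1_intro => u; rewrite /ext_nbrs !inE => /andP [gwu].
have ux : u != x by apply: contraFneq gwx => <-.
have uy : u != y by apply: contraFneq gwx => e; rewrite Heq // -e.
rewrite (negbTE ux) (negbTE uy) /= andbT negbK => uX.
have [u' [u'X u'u gu']] := HC w wD wX (negbT gwx) u uX gwu.
by exists u' => //; rewrite !inE gu' u'X.
Qed.
End Main.

Section Gam.
Variables (T : finType) (g : rel T).
Hypothesis gsym : symmetric g.

Lemma cert_compl2 (D : {set T}) v : certified_dominating g D -> v \notin D -> 1 < #|~: D|.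
Proof.
case/andP => /forallP /(_ v) /implyP H /forall_inP Hc vD.
have [u uD gvu] := exists_inP (H vD).
have vE : v \in ext_nbrs g D u by rewrite !inE gsym gvu.
have [w wE wv] := ne1_elim (Hc u uD) vE.
apply/card_gt1P; exists v, w; move: wE; rewrite !inE => /andP [_ ->].
by rewrite vD eq_sym wv.
Qed.

Lemma gamma_iff : 3 <= #|T| ->
  (Gamma_cer g = #|T| - 2 <->
   exists x y, x != y /\ minimal_certified_dominating g (~:[set x;y])).
Proof.
move=> n3; split.
  move=> HG.
  case: (pickP (fun D => minimal_certified_dominating g D)) => [D0 HD0|H0]; last first.
    move: HG; rewrite /Gamma_cer big_pred0 // => e; move: n3; rewrite -(subnK (leqnSn 2)).
    by move: e; case: (#|T|) => [|[|[|k]]].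
  have cpos : 0 < #|[pred D | minimal_certified_dominating g D]|.
    by apply/card_gt0P; exists D0.
  have [D1 HD1 e] := @eq_bigmax_cond _ [pred D | minimal_certified_dominating g D]
      (fun D => #|D|) cpos.
  move: HG; rewrite /Gamma_cer e => hc.
  have c2 : #|~: D1| == 2.
    by move: (cardsC D1); rewrite hc => e2; apply/eqP; move: e2 n3; clear; lia.
  have [x [y [xy ey]]] := cards2P _ c2.
  by exists x, y; split=> //; rewrite -ey setCK.
case=> x [y [xy Hm]].
have cD : #|~:[set x; y]| = #|T| - 2.
  by move: (cardsC [set x;y]); rewrite cards2 xy => <-; rewrite addKn.
apply/eqP; rewrite eqn_leq; apply/andP; split; last first.
  by rewrite -cD /Gamma_cer; apply: (leq_bigmax_cond (~:[set x;y])).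
apply/bigmax_leqP => D /andP [Hc /forallP Hmin].
case: (boolP [exists v, v \notin D]) => [/existsP [v vD]|].
  have := cert_compl2 Hc vD; move: (cardsC D); clear; lia.
rewrite negb_exists => /forallP Hall.
have DT : D = setT by apply/setP => v; rewrite inE; move: (Hall v); rewrite negbK.
move: (Hmin (~:[set x;y])); rewrite DT properE subsetT /= => H.
have : ~~ ([set: T] \subset ~: [set x; y]).
  by apply/negP => /subsetP /(_ x); rewrite !inE eqxx /= => /(_ isT).
by move=> h; move: H; rewrite h /= (andP Hm).1.
Qed.
End Gam.

Section Struct.
Variables (T : finType) (g : rel T).
Hypothesis gsym : symmetric g.
Hypothesis girr : irreflexive g.
Hypothesis gconn : forall a b, connect g a b.
Hypothesis n3 : 3 <= #|T|.
Implicit Types u v w l p a b : T.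

Lemma nbr_ex v : exists u, g v u.
Proof.
have : 1 < #|[set: T]| by rewrite cardsT; apply: leq_trans n3.
case/card_gt1P => a [b [_ _ ab]].
have [w wv] : exists w, w != v.
  by case: (eqVneq a v) => [e|]; [exists b; rewrite -e eq_sym | exists a].
case/connectP: (gconn v w) => [[|u q] /= pth lst]; first by rewrite lst eqxx in wv.
by exists u; case/andP: pth.
Qed.

Lemma closed_reach (A : {set T}) a b :
  (forall c d, c \in A -> g c d -> d \in A) -> a \in A -> b \in A.
Proof.
move=> cl aA; case/connectP: (gconn a b) => q pth ->.
elim: q a aA pth => [|c q IH] a aA //= /andP [gac pth].
by apply: IH pth; apply: cl gac.
Qed.

Variables (x y : T).
Hypothesis hxy : x != y.
Hypothesis Hmin : minimal_certified_dominating g (~:[set x;y]).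

Definition inDD v := (v != x) && (v != y).
Lemma inDE v : (v \in ~:[set x;y]) = inDD v.
Proof. by rewrite inD. Qed.

Lemma Heq v : inDD v -> g v x = g v y.
Proof. by case/andP => a b; apply: cert_eq hxy (andP Hmin).1 v a b. Qed.

Definition isS v := inDD v && g v x.
Definition isR v := inDD v && ~~ g v x.
Definition leaf v := isR v && (#|[set u | g v u]| == 1).
Definition isP v := [&& isR v, ~~ leaf v & [exists l, leaf l && g l v]].
Definition isU v := [&& isR v, ~~ leaf v & ~~ [exists l, leaf l && g l v]].
Definition isW v := isS v || isU v.

Lemma R_nbr r u : isR r -> g r u -> inDD u.
Proof.
case/andP => rD rx gru; apply/andP; split.
  by apply: contraNneq rx => <-.
by apply: contraNneq rx => e; rewrite Heq // -e.
Qed.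

Lemma leafP l : leaf l -> exists p, g l p /\ forall u, g l u -> u = p.
Proof.
case/andP => _ /cards1P [p e]; exists p; split.
  have : p \in [set p] by rewrite set11.
  by rewrite -e inE.
move=> u gu; have : u \in [set u0 | g l u0] by rewrite inE.
by rewrite e inE => /eqP.
Qed.

Lemma leaf_uniq l p q : leaf l -> g l p -> g l q -> p = q.
Proof. by case/leafP => z [_ H] /H -> /H ->. Qed.

Lemma S_exists : exists s0, isS s0.
Proof.
have [u [ux uy gxu]] := cert_S (andP Hmin).1.
by exists u; rewrite /isS /inDD ux uy gsym.
Qed.

Lemma leaf_R l : leaf l -> isR l. Proof. by case/andP. Qed.
Lemma S_notR v : isS v -> ~~ isR v. Proof. by case/andP => _ h; rewrite /isR h andbF. Qed.
Lemma S_notleaf v : isS v -> ~~ leaf v.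
Proof. by move=> h; apply: contra (S_notR h); apply: leaf_R. Qed.

Lemma f2 l p : leaf l -> g l p -> isR p.
Proof.
move=> ll glp; have lR := leaf_R ll.
have pD := R_nbr lR glp.
rewrite /isR pD /=; apply/negP => gpx.
case/andP: (lR) => lD lx.
apply: (removable gsym hxy Hmin (X := [set l])).
- by apply/subsetP => z; rewrite inE => /eqP ->; rewrite inDE.
- by exists l; rewrite set11.
- exists p; rewrite inDE pD gpx inE; split => //.
  by apply: contraTneq glp => ->; rewrite girr.
- move=> v; rewrite inE => /eqP ->; exists p; rewrite inDE pD inE glp; split=> //.
  by apply: contraTneq glp => ->; rewrite girr.
- move=> w _ _ wx u; rewrite inE => /eqP -> gwl.
  have e : w = p by apply: leaf_uniq ll _ glp; rewrite gsym.
  by rewrite e gpx in wx.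
Qed.

Lemma f3 l p : leaf l -> g l p -> ~~ leaf p.
Proof.
move=> ll glp; apply/negP => lp.
have gpl : g p l by rewrite gsym.
have : x \in [set l; p].
  apply: (@closed_reach _ l) => [c d|]; last by rewrite !inE eqxx.
  rewrite !inE => /orP [] /eqP -> gd.
    by rewrite (leaf_uniq ll gd glp) eqxx orbT.
  by rewrite (leaf_uniq lp gd gpl) eqxx.
case/andP: (leaf_R ll) => /andP [lx _] _; case/andP: (leaf_R lp) => /andP [px _] _.
by rewrite !inE !(eq_sym x) (negbTE lx) (negbTE px).
Qed.

Lemma f4 l1 l2 p : leaf l1 -> leaf l2 -> g l1 p -> g l2 p -> l1 = l2.
Proof.
move=> ll1 ll2 g1 g2; apply/eqP/negP => /negP ne.
have pR := f2 ll1 g1.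
have [s0 s0S] := S_exists.
have notX z : isS z -> z \notin [set l1; l2].
  move=> zS; rewrite !inE; apply/negP => /orP [] /eqP e.
    by move: (S_notR zS); rewrite e (leaf_R ll1).
  by move: (S_notR zS); rewrite e (leaf_R ll2).
have pnot : p \notin [set l1; l2].
  rewrite !inE; apply/negP => /orP [] /eqP e.
    by rewrite -e girr in g1.
  by rewrite -e girr in g2.
apply: (removable gsym hxy Hmin (X := [set l1; l2])).
- apply/subsetP => z; rewrite !inE => /orP [] /eqP ->.
    by case/andP: (leaf_R ll1) => /andP [a b] _; by rewrite negb_or a b.
  by case/andP: (leaf_R ll2) => /andP [a b] _; by rewrite negb_or a b.
- by exists l1; rewrite !inE eqxx.
- exists s0; case/andP: (s0S) => s0D s0x; rewrite inDE s0D s0x notX //.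
- move=> v; rewrite !inE => /orP [] /eqP ->; exists p; rewrite inDE (andP pR).1 pnot //.
- move=> w _ _ _ u; rewrite !inE => /orP [] /eqP -> gw.
    have e : w = p by apply: leaf_uniq ll1 _ g1; rewrite gsym.
    by exists l2; rewrite !inE eqxx orbT eq_sym ne e gsym.
  have e : w = p by apply: leaf_uniq ll2 _ g2; rewrite gsym.
  by exists l1; rewrite !inE eqxx ne e gsym.
Qed.


Lemma W_notleaf v : isW v -> ~~ leaf v.
Proof. by case/orP => [/S_notleaf //| /and3P []]. Qed.
Lemma W_inD v : isW v -> inDD v.
Proof. by case/orP => [/andP [] | /and3P [/andP []]]. Qed.
Lemma P_notW v : isP v -> ~~ isW v.
Proof.
case/and3P => vR _ E; rewrite /isW negb_or; apply/andP; split.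
  by apply: contraL vR => /S_notR.
by rewrite /isU E !andbF.
Qed.
Lemma RW_P u : inDD u -> ~~ isW u -> ~~ leaf u -> isP u.
Proof.
move=> uD uW ul.
have uR : isR u.
  rewrite /isR uD /=; apply/negP => gux; move: uW; by rewrite /isW /isS uD gux.
rewrite /isP uR ul /=; move: uW; rewrite /isW /isU uR ul /= negb_or => /andP [_].
by rewrite negbK.
Qed.
Lemma sup_notW l p : leaf l -> g l p -> ~~ isW p.
Proof.
move=> ll glp; have pR := f2 ll glp.
rewrite /isW negb_or; apply/andP; split; first by apply: contraL pR => /S_notR.
rewrite /isU; apply/negP => /and3P [_ _ /negP]; apply; apply/existsP; exists l.
by rewrite ll glp.
Qed.

Lemma Klemma s (K : {set T}) : isS s -> s \in K -> (forall v, v \in K -> isW v) ->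
  (forall w, isW w -> w \notin K -> exists u, ((u \in K) || isP u) && g w u) ->
  (forall k, k \in K -> isU k -> forall u, isW u -> u \notin K -> g k u ->
     exists u', [/\ isW u', u' \notin K, u' != u & g k u']) ->
  (exists w, isW w && (w \notin K)) -> False.
Proof.
move=> sS sK KW Hi Hii [w0 /andP [w0W w0K]].
pose C (p : T) : {set T} := [set u | [&& g p u, isW u & u \notin K]].
pose X := [set v | (isW v && (v \notin K)) || (leaf v && [exists p, g v p && (#|C p| == 1)])].
have supX l p : leaf l -> g l p -> p \notin X.
  move=> ll glp; rewrite inE negb_or (negbTE (sup_notW ll glp)) /=.
  by rewrite (negbTE (f3 ll glp)).
apply: (removable gsym hxy Hmin (X := X)).
- apply/subsetP => z; rewrite inE inDE => /orP [/andP [zW _] | /andP [zl _]].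
    exact: W_inD.
  by case/andP: (leaf_R zl).
- by exists w0; rewrite inE w0W w0K.
- exists s; case/andP: (sS) => sD sx; rewrite inDE sD sx inE sK /= andbF /=.
  by rewrite (negbTE (S_notleaf sS)).
- move=> v; rewrite inE => /orP [/andP [vW vK] | /andP [vl /existsP [p /andP [gvp _]]]].
    have [u /andP [/orP [uK|uP] gvu]] := Hi v vW vK.
      exists u; rewrite inDE W_inD ?KW // inE uK andbF /= gvu.
      by rewrite (negbTE (W_notleaf (KW u uK))).
    exists u; rewrite inDE inE gvu (negbTE (P_notW uP)) /=.
    by case/and3P: uP => /andP [-> _] /negbTE ->.
  exists p; rewrite inDE gvp (supX v p vl gvp); split => //.
  exact: R_nbr (leaf_R vl) gvp.
- move=> w wD wX wx u uX gwu.
  have wR : isR w by rewrite /isR -inDE wD wx.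
  case: (boolP (leaf w)) => wl.
    by have [p [gwp Hp]] := leafP wl; move: uX; rewrite (Hp u gwu) (negbTE (supX w p wl gwp)).
  case: (boolP [exists l, leaf l && g l w]) => [/existsP [l0 /andP [l0l gl0w]] | nol].
    move: uX; rewrite inE => /orP [/andP [uW uK] | /andP [ul /existsP [p /andP [gup cp]]]].
      have uC : u \in C w by rewrite inE gwu uW uK.
      case: (boolP (#|C w| == 1)) => c1.
        exists l0; split.
        + by rewrite inE l0l /=; apply/orP; right; apply/existsP; exists w; rewrite gl0w c1.
        + by apply: contraTneq l0l => ->; apply: W_notleaf.
        + by rewrite gsym.
      have [u' u'C u'u] := ne1_elim c1 uC.
      move: u'C; rewrite inE => /and3P [gwu' u'W u'K].
      by exists u'; rewrite inE u'W u'K.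
    have e : p = w by apply: leaf_uniq ul gup _; rewrite gsym.
    rewrite e in cp; have [z ez] := cards1P cp.
    have : z \in C w by rewrite ez set11.
    rewrite inE => /and3P [gwz zW zK].
    exists z; rewrite inE zW zK gwz; split => //.
    by apply: contraTneq ul => <-; apply: W_notleaf.
  have wU : isU w by rewrite /isU wR wl nol.
  have wK : w \in K.
    by move: wX; rewrite inE negb_or /isW wU orbT /= negbK => /andP [].
  move: uX; rewrite inE => /orP [/andP [uW uK] | /andP [ul /existsP [p /andP [gup _]]]].
    have [u' [u'W u'K u'u gu']] := Hii w wK wU u uW uK gwu.
    by exists u'; rewrite inE u'W u'K.
  by move/negP: nol; case; apply/existsP; exists u; rewrite ul gsym.
Qed.


Lemma Windep a b : isW a -> isW b -> ~~ g a b.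
Proof.
have [s0 s0S] := S_exists.
pose U1 u := isU u && (#|[set v | g u v && isW v]| == 1).
pose Pind (A : {set T}) := [forall a in A, isW a && ~~ U1 a] &&
   [forall a in A, forall b in A, ~~ g a b].
have P0 : Pind [set s0].
  apply/andP; split; apply/forall_inP => c; rewrite inE => /eqP ->.
    rewrite /isW s0S /= /U1; apply/negP => /andP [/and3P [s0R _ _] _].
    by move: (S_notR s0S); rewrite s0R.
  by apply/forall_inP => d; rewrite inE => /eqP ->; rewrite girr.
have [K KM sK] := maxset_exists P0.
have [/andP [/forall_inP KW1 /forall_inP Kind1] maxK] := maxsetP KM.
have KW c : c \in K -> isW c && ~~ U1 c by move/KW1.
have Kind c d : c \in K -> d \in K -> ~~ g c d by move=> cK dK; move: (Kind1 c cK) => /forall_inP; apply.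
have Kmax w : isW w -> ~~ U1 w -> w \notin K -> exists2 k, k \in K & g w k.
  move=> wW wU wK; case: (boolP [exists k in K, g w k]) => [/exists_inP [k kK gk] | H].
    by exists k.
  exfalso; have PwK : Pind (w |: K).
    apply/andP; split; apply/forall_inP => c; rewrite !inE => /orP [/eqP -> | cK].
    - by rewrite wW.
    - exact: KW.
    - apply/forall_inP => d; rewrite !inE => /orP [/eqP -> | dK]; first by rewrite girr.
      by apply: contra H => gwd; apply/exists_inP; exists d.
    - apply/forall_inP => d; rewrite !inE => /orP [/eqP -> | dK]; last exact: Kind.
      by apply: contra H => gcw; apply/exists_inP; exists c; rewrite // gsym.
  have := maxK _ PwK (subsetUr _ _) => e.
  by move: wK; rewrite -e !inE eqxx.
case: (boolP [exists w, isW w && (w \notin K)]) => [/existsP [w0 Hw0] | Hall].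
  exfalso; apply: (@Klemma s0 K s0S).
  - by apply: (subsetP sK); rewrite set11.
  - by move=> v /KW /andP [].
  - move=> w wW wK; case U1w: (U1 w); last first.
      by have [k kK gk] := Kmax w wW (negbT U1w) wK; exists k; rewrite kK.
    move: U1w => /andP [wU /cards1P [c eC]].
    have wR : isR w by case/and3P: wU.
    have wl : ~~ leaf w by case/and3P: wU.
    have [t gt] := nbr_ex w.
    have Nw1 : #|[set u | g w u]| != 1 by move: wl; rewrite /leaf wR.
    have tN : t \in [set u | g w u] by rewrite inE.
    have [t' t'N t't] := ne1_elim Nw1 tN.
    have [u [gwu uC]] : exists u, g w u /\ u \notin [set v | g w v && isW v].
      case: (boolP (t \in [set v | g w v && isW v])) => tC; last by exists t.
      exists t'; split; first by move: t'N; rewrite inE.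
      apply/negP; rewrite eC inE => /eqP et'; move: tC; rewrite eC inE => /eqP et.
      by move: t't; rewrite et et' eqxx.
    exists u; rewrite gwu andbT; apply/orP; right; apply: RW_P.
    + exact: R_nbr wR gwu.
    + by move: uC; rewrite inE gwu.
    + apply/negP => ul; case/and3P: wU => _ _ /negP; apply; apply/existsP; exists u.
      by rewrite ul gsym.
  - move=> k kK kU u uW uK gku.
    have /andP [_ kU1] := KW k kK.
    have Ck : #|[set v | g k v && isW v]| != 1 by move: kU1; rewrite /U1 kU.
    have uC : u \in [set v | g k v && isW v] by rewrite inE gku uW.
    have [u' u'C u'u] := ne1_elim Ck uC.
    move: u'C; rewrite inE => /andP [gku' u'W].
    exists u'; split => //; apply/negP => u'K.
    by move: (Kind k u' kK u'K); rewrite gku'.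
  - by exists w0.
move=> aW bW; rewrite negb_exists in Hall.
have inK c : isW c -> c \in K.
  by move=> cW; move/forallP: Hall => /(_ c); rewrite cW /= negbK.
exact: Kind (inK a aW) (inK b bW).
Qed.

Lemma noU u : ~~ isU u.
Proof.
apply/negP => uU.
have [s0 s0S] := S_exists.
have uW : isW u by rewrite /isW uU orbT.
have uR : isR u by case/and3P: uU.
apply: (@Klemma s0 [set v | isW v && (v != u)] s0S).
- rewrite inE /isW s0S /=; apply: contraTneq uR => <-; exact: S_notR.
- by move=> v; rewrite inE => /andP [].
- move=> w wW; rewrite inE wW /= negbK => /eqP ->.
  have [t gt] := nbr_ex u.
  exists t; rewrite gt andbT; apply/orP; right; apply: RW_P.
  + exact: R_nbr uR gt.
  + by apply: contraL gt => tW; exact: Windep.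
  + apply/negP => tl; case/and3P: uU => _ _ /negP; apply; apply/existsP; exists t.
    by rewrite tl gsym.
- move=> k _ kU u' u'W _ gku'; exfalso.
  have kW : isW k by rewrite /isW kU orbT.
  by move: (Windep kW u'W); rewrite gku'.
- by exists u; rewrite inE uW eqxx.
Qed.


Lemma noPnbr s1 s2 t : isS s1 -> isS s2 -> s1 != s2 -> isP t -> ~~ g s2 t.
Proof.
move=> s1S s2S ne tP; apply/negP => g2t.
have s2W : isW s2 by rewrite /isW s2S.
apply: (@Klemma s1 [set v | isW v && (v != s2)] s1S).
- by rewrite inE /isW s1S.
- by move=> v; rewrite inE => /andP [].
- move=> w wW; rewrite inE wW /= negbK => /eqP ->.
  by exists t; rewrite g2t tP orbT.
- move=> k _ kU u uW _ gku.
  have kW : isW k by rewrite /isW kU orbT.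
  by move: (Windep kW uW); rewrite gku.
- by exists s2; rewrite inE s2W eqxx.
Qed.

Lemma Suniq (Hr : exists r, isR r) s1 s2 : isS s1 -> isS s2 -> s1 = s2.
Proof.
move=> s1S s2S; apply/eqP/negP => /negP ne.
have noP z t : isS z -> isP t -> ~~ g z t.
  move=> zS tP; case: (eqVneq z s1) => [->|zs1].
    by apply: (noPnbr s2S s1S) tP; rewrite eq_sym.
  by apply: (noPnbr s1S zS) tP; rewrite eq_sym.
have [r rR] := Hr.
have : isR x.
  have : x \in [set v | isR v].
    apply: (@closed_reach [set v | isR v] r x) => [c d|]; last by rewrite inE.
    rewrite !inE => cR gcd; have dD := R_nbr cR gcd.
    rewrite /isR dD /=; apply/negP => gdx.
    have dS : isS d by rewrite /isS dD gdx.
    case: (boolP (leaf c)) => cl.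
      by move: (f2 cl gcd); rewrite /isR gdx andbF.
    have cP : isP c.
      apply: RW_P (andP cR).1 _ cl; rewrite /isW negb_or noU andbT.
      by apply/negP => cS; move: (S_notR cS); rewrite cR.
    by move: (noP d c dS cP); rewrite gsym gcd.
  by rewrite inE.
by rewrite /isR /inDD eqxx.
Qed.

Lemma Rempty_indep (H0 : forall v, inDD v -> g v x) u v : inDD u -> inDD v -> ~~ g u v.
Proof.
move=> uD vD; apply/negP => guv.
apply: (removable gsym hxy Hmin (X := [set u])).
- by apply/subsetP => z; rewrite inE => /eqP ->; rewrite inDE.
- by exists u; rewrite set11.
- exists v; rewrite inDE vD H0 // inE; split => //.
  by apply: contraTneq guv => ->; rewrite girr.
- move=> w; rewrite inE => /eqP ->; exists v; rewrite inDE vD inE guv; split => //.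
  by apply: contraTneq guv => ->; rewrite girr.
- move=> w wD _ wx; rewrite inDE in wD.
  by rewrite H0 in wx.
Qed.


Lemma iso_of (T2 : finType) (g2 : rel T2) (f : T -> T2) (f' : T2 -> T) :
  cancel f f' -> cancel f' f -> (forall u v, g u v = g2 (f u) (f v)) -> isomorphic g g2.
Proof. by move=> c1 c2 e; exists f; split => //; exists f'. Qed.

Lemma cardD2 : #|~:[set x;y]| = #|T| - 2.
Proof. by move: (cardsC [set x;y]); rewrite cards2 hxy => <-; rewrite addKn. Qed.

Lemma isoA (H0 : forall v, inDD v -> g v x) :
  (g x y -> isomorphic g (@K2_join_barK (#|T| - 2))) /\
  (~~ g x y -> isomorphic g (@barK2_join_barK (#|T| - 2))).
Proof.
have [u0 [u0x u0y _]] := cert_S (andP Hmin).1.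
have u0D : u0 \in ~:[set x;y] by rewrite inDE /inDD u0x u0y.
pose rk := enum_rank_in u0D.
pose f : T -> (bool + 'I_(#|T| - 2))%type := fun v =>
  if v == x then inl true else if v == y then inl false else inr (cast_ord cardD2 (rk v)).
pose f' : (bool + 'I_(#|T| - 2))%type -> T := fun z =>
  match z with inl b => if b then x else y | inr i => enum_val (cast_ord (esym cardD2) i) end.
have yx : (y == x) = false by rewrite eq_sym (negbTE hxy).
have fx : f x = inl true by rewrite /f eqxx.
have fy : f y = inl false by rewrite /f yx eqxx.
have fD v : v \in ~:[set x;y] -> f v = inr (cast_ord cardD2 (rk v)).
  by rewrite /f inDE => /andP [/negbTE -> /negbTE ->].
have cls v : [\/ v = x, v = y | v \in ~:[set x;y]].
  case: (eqVneq v x) => [->|vx]; first by constructor 1.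
  case: (eqVneq v y) => [->|vy]; first by constructor 2.
  by constructor 3; rewrite inDE /inDD vx vy.
have c1 : cancel f f'.
  move=> v; case: (cls v) => [->|->|vD]; rewrite ?fx ?fy ?fD //=.
  by rewrite cast_ordK enum_rankK_in.
have c2 : cancel f' f.
  case=> [[]|i] /=; rewrite ?fx ?fy //.
  have vD := enum_valP (cast_ord (esym cardD2) i).
  by rewrite fD // /rk enum_valK_in cast_ordKV.
have gD v : v \in ~:[set x;y] -> g x v /\ g y v.
  rewrite inDE => vD; have vx := H0 v vD.
  by rewrite gsym vx gsym -Heq.
have DD u v : u \in ~:[set x;y] -> v \in ~:[set x;y] -> g u v = false.
  by rewrite !inDE => uD vD; apply: negbTE; apply: Rempty_indep.
split => gxy; apply: (iso_of c1 c2) => u v.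
  case: (cls u) => [->|->|uD]; case: (cls v) => [->|->|vD];
  rewrite ?fx ?fy ?fD //= ?girr ?gxy //; try by case: (gD _ uD).
  all: try first [ by case: (gD _ vD) | by rewrite gsym; case: (gD _ uD) | by rewrite gsym | by rewrite DD ].
case: (cls u) => [->|->|uD]; case: (cls v) => [->|->|vD];
rewrite ?fx ?fy ?fD //= ?girr ?(negbTE gxy) //; try by case: (gD _ uD).
all: try first [ by case: (gD _ vD) | by rewrite gsym; case: (gD _ uD) | by rewrite gsym (negbTE gxy) | by rewrite DD ].
Qed.


Lemma isoB (Hr : exists r, isR r) : is_simple_diadem g \/ is_diadem g.
Proof.
have [s0 s0S] := S_exists.
have sU v : isS v -> v = s0 by move=> vS; exact: (Suniq Hr vS s0S).
pose Sup := [set v | inDD v && ~~ leaf v].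
have s0Sup : s0 \in Sup by rewrite inE (andP s0S).1 S_notleaf.
pose rk := enum_rank_in s0Sup.
pose ev : 'I_#|Sup| -> T := fun i => enum_val i.
pose supof l := odflt l [pick p | g l p].
pose lfof a := if a == s0 then y else odflt a [pick l | leaf l && g l a].
pose h : rel 'I_#|Sup| := fun i j => g (ev i) (ev j).
pose s := rk s0.
have supofP l : leaf l -> g l (supof l).
  move=> ll; rewrite /supof; case: pickP => [p gp //| none].
  by have [p [gp _]] := leafP ll; move: (none p); rewrite gp.
have s0R : ~~ isR s0 by apply: S_notR.
have supofS l : leaf l -> (supof l \in Sup) && (supof l != s0).
  move=> ll; have gp := supofP l ll; have pR := f2 ll gp.
  rewrite inE (andP pR).1 (f3 ll gp) /=; by apply: contraTneq pR => ->.
have aR a : a \in Sup -> a != s0 -> isR a.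
  rewrite inE => /andP [aD _] as0; rewrite /isR aD /=; apply/negP => gax.
  by move: as0; rewrite (sU a) ?eqxx // /isS aD gax.
have lfofP a : a \in Sup -> a != s0 -> leaf (lfof a) && g (lfof a) a.
  move=> aS as0; rewrite /lfof (negbTE as0); case: pickP => [l -> //| none] /=.
  have : isP a.
    apply: RW_P; first by move: aS; rewrite inE => /andP [].
      rewrite /isW negb_or noU andbT; apply: contraL (aR a aS as0); exact: S_notR.
    by move: aS; rewrite inE => /andP [].
  by case/and3P => _ _ /existsP [l /andP [ll gla]]; move: (none l); rewrite ll gla.
have supof_lf a : a \in Sup -> a != s0 -> supof (lfof a) = a.
  move=> aS as0; case/andP: (lfofP a aS as0) => ll gla.
  exact: leaf_uniq ll (supofP _ ll) gla.
have lf_sup l : leaf l -> lfof (supof l) = l.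
  move=> ll; case/andP: (supofS l ll) => pS ps0.
  case/andP: (lfofP _ pS ps0) => l'l gl'.
  exact: f4 l'l ll gl' (supofP l ll).
have cls v : [\/ v = x, v = y, v \in Sup | leaf v].
  case: (eqVneq v x) => [->|vx]; first by constructor 1.
  case: (eqVneq v y) => [->|vy]; first by constructor 2.
  case: (boolP (leaf v)) => vl; first by constructor 4.
  by constructor 3; rewrite inE /inDD vx vy.
have SD a : a \in Sup -> (a != x) && (a != y) by rewrite inE => /andP [].
have LD l : leaf l -> (l != x) && (l != y) by move/leaf_R => /andP [].
have LnS l : leaf l -> l \notin Sup by move=> ll; rewrite inE ll andbF.
have rkeq a b : a \in Sup -> b \in Sup -> (rk a == rk b) = (a == b).
  move=> aS bS; apply/eqP/eqP => [e|->//].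
  by rewrite -(enum_rankK_in s0Sup aS) -(enum_rankK_in s0Sup bS) -/rk e.
have yx : (y == x) = false by rewrite eq_sym (negbTE hxy).
pose f v : option ('I_#|Sup| + 'I_#|Sup|) :=
  if v == x then None else if v == y then Some (inr s)
  else if v \in Sup then Some (inl (rk v)) else Some (inr (rk (supof v))).
pose f' (z : option ('I_#|Sup| + 'I_#|Sup|)) : T :=
  match z with None => x | Some (inl i) => ev i | Some (inr i) => lfof (ev i) end.
have fx : f x = None by rewrite /f eqxx.
have fy : f y = Some (inr s) by rewrite /f yx eqxx.
have fS a : a \in Sup -> f a = Some (inl (rk a)).
  by move=> aS; case/andP: (SD a aS) => /negbTE ax /negbTE ay; rewrite /f ax ay aS.
have fL l : leaf l -> f l = Some (inr (rk (supof l))).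
  move=> ll; case/andP: (LD l ll) => /negbTE lx /negbTE ly.
  by rewrite /f lx ly (negbTE (LnS l ll)).
have evrk a : a \in Sup -> ev (rk a) = a by move=> aS; apply: enum_rankK_in.
have c1 : cancel f f'.
  move=> v; case: (cls v) => [->|->|vS|vl].
  - by rewrite fx.
  - by rewrite fy /= /s evrk // /lfof eqxx.
  - by rewrite (fS v vS) /= evrk.
  - by case/andP: (supofS v vl) => pS _; rewrite (fL v vl) /= evrk // lf_sup.
have c2 : cancel f' f.
  case=> [[i|i]|] /=; last exact: fx.
    by rewrite fS ?enum_valP // /rk enum_valK_in.
  have aS : ev i \in Sup by apply: enum_valP.
  case: (eqVneq (ev i) s0) => [e|ne].
    rewrite /lfof e eqxx fy /s -e /rk enum_valK_in //.
  case/andP: (lfofP _ aS ne) => ll _.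
  by rewrite fL // supof_lf // /rk enum_valK_in.
have gxa a : a \in Sup -> g x a = (a == s0).
  move=> aS; rewrite gsym; apply/idP/eqP => [gax|->]; last by case/andP: s0S.
  by apply: sU; rewrite /isS gax andbT; move: aS; rewrite inE => /andP [].
have gya a : a \in Sup -> g y a = (a == s0).
  move=> aS; rewrite gsym -Heq; first by rewrite gsym gxa.
  by move: aS; rewrite inE => /andP [].
have gxl l : leaf l -> g x l = false.
  by move=> ll; rewrite gsym; case/andP: (leaf_R ll) => _ /negbTE.
have gyl l : leaf l -> g y l = false.
  by move=> ll; case/andP: (leaf_R ll) => lD /negbTE lx; rewrite gsym -Heq.
have gal a l : a \in Sup -> leaf l -> g a l = (a == supof l).
  move=> aS ll; apply/idP/eqP => [gal|->]; last by rewrite gsym supofP.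
  by apply: leaf_uniq ll _ (supofP l ll); rewrite gsym.
have gll l l' : leaf l -> leaf l' -> g l l' = false.
  move=> ll ll'; apply/negP => g1; by move: (f3 ll g1); rewrite ll'.
have sns l : leaf l -> (rk (supof l) == s) = false.
  move=> ll; case/andP: (supofS l ll) => pS ps0; rewrite /s rkeq //.
  exact: negbTE.
case: (boolP (g x y)) => gxy; [right | left]; exists #|Sup|, h, s; split;
  (try by split; [move=> i j; rewrite /h gsym | move=> i; rewrite /h girr]);
  apply: (iso_of c1 c2) => u v;
  (case: (cls u) => [->|->|uS|ul];
  [rewrite ?fx | rewrite ?fy | rewrite (fS u uS) | rewrite (fL u ul)]);
  (case: (cls v) => [->|->|vS|vl];
  [rewrite ?fx | rewrite ?fy | rewrite (fS v vS) | rewrite (fL v vl)]);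
  rewrite /= ?girr ?gxy ?(negbTE gxy) ?eqxx //.
all: try by rewrite gxa.
all: try by rewrite gxl.
all: try by rewrite gsym gxa.
all: try by rewrite gsym gxl.
all: try by rewrite gya // /s rkeq // eq_sym.
all: try by rewrite gyl.
all: try by rewrite gsym gya // /s rkeq.
all: try by rewrite gsym gyl.
all: try by rewrite /s rkeq.
all: try by rewrite gal // rkeq // ; case/andP: (supofS _ vl).
all: try by rewrite gsym gal // rkeq // eq_sym ; case/andP: (supofS _ ul).
all: try by rewrite gll.
all: try by rewrite /h !evrk.
all: try by rewrite gsym.
all: try by rewrite sns.
all: try by rewrite gxa // /s rkeq.
all: try by rewrite gxl // sns.
all: try by rewrite gsym gxa // /s rkeq.
all: try by rewrite gsym gxl // sns.
all: try by rewrite gsym gal // rkeq // ?eq_sym; case/andP: (supofS _ ul).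
all: try by rewrite gsym (negbTE gxy).
Qed.


Lemma forward : [\/ is_simple_diadem g, is_diadem g,
         isomorphic g (@K2_join_barK (#|T| - 2))
       | isomorphic g (@barK2_join_barK (#|T| - 2))].
Proof.
case: (boolP [exists r, isR r]) => [/existsP [r rR] | none].
  by case: (isoB (ex_intro _ r rR)) => H; [constructor 1 | constructor 2].
have H0 v : inDD v -> g v x.
  move=> vD; apply/negPn/negP => gvx; move/existsP: none; apply; exists v.
  by rewrite /isR vD.
have [hA hB] := isoA H0.
by case: (boolP (g x y)) => gxy; [constructor 3; exact: hA | constructor 4; exact: hB].
Qed.

End Struct.

Section Transport.
Variables (T1 T2 : finType) (g1 : rel T1) (g2 : rel T2) (f : T1 -> T2) (f' : T2 -> T1).
Hypothesis c1 : cancel f f'.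
Hypothesis c2 : cancel f' f.
Hypothesis ge : forall u v, g1 u v = g2 (f u) (f v).

Lemma cert_pre (A : {set T2}) :
  certified_dominating g2 A -> certified_dominating g1 (f @^-1: A).
Proof.
case/andP => /forallP Hd /forall_inP Hc; apply/andP; split.
  apply/forallP => v; apply/implyP; rewrite inE => vA.
  have [z zA gz] := exists_inP (implyP (Hd (f v)) vA).
  by apply/exists_inP; exists (f' z); [rewrite inE c2 | rewrite ge c2].
apply/forall_inP => v; rewrite inE => vA.
apply: ne1_intro => u; rewrite !inE => /andP [gvu uA].
have fuE : f u \in ext_nbrs g2 A (f v) by rewrite !inE -ge gvu uA.
have [w wE wu] := ne1_elim (Hc _ vA) fuE.
exists (f' w).
  by move: wE; rewrite !inE ge c2.
by apply: contra wu => /eqP <-; rewrite c2.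
Qed.

End Transport.

Lemma transport (T1 T2 : finType) (g1 : rel T1) (g2 : rel T2) (f : T1 -> T2) :
  bijective f -> (forall u v, g1 u v = g2 (f u) (f v)) ->
  (exists x y, x != y /\ minimal_certified_dominating g2 (~:[set x;y])) ->
  exists x y, x != y /\ minimal_certified_dominating g1 (~:[set x;y]).
Proof.
case=> f' c1 c2 ge [x [y [xy /andP [Hc /forallP Hm]]]].
have ge' u v : g2 u v = g1 (f' u) (f' v) by rewrite ge !c2.
have eD : ~:[set f' x; f' y] = f @^-1: ~:[set x;y].
  apply/setP => v; rewrite !inE; congr (~~ (_ || _)).
    by apply/eqP/eqP => [->|<-]; rewrite ?c2 ?c1.
  by apply/eqP/eqP => [->|<-]; rewrite ?c2 ?c1.
exists (f' x), (f' y); split; first by apply: contra xy => /eqP /(can_inj c2) ->.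
rewrite eD; apply/andP; split.
  exact: (cert_pre c2 ge Hc).
apply/forallP => D'; apply/implyP => pD; apply/negP => cD'.
have := cert_pre c1 ge' cD'.
move: (Hm (f' @^-1: D')) => /implyP H1 H2; move: H2; apply/negP; apply: H1.
move: pD; rewrite !properE => /andP [/subsetP s1 ns].
apply/andP; split.
  apply/subsetP => w; rewrite inE => /s1; rewrite inE c2 //.
apply: contra ns => /subsetP s2; apply/subsetP => v; rewrite inE => vA.
by have := s2 (f v) vA; rewrite inE c1.
Qed.

Lemma model_join m (R : rel (bool + 'I_m)) : 0 < m ->
  (forall a i, R (inl a) (inr i)) -> (forall a i, R (inr i) (inl a)) ->
  (forall i j, R (inr i) (inr j) = false) ->
  exists x y, x != y /\ minimal_certified_dominating R (~:[set x;y]).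
Proof.
move=> hm Rlr Rrl Rrr; exists (inl true), (inl false); split => //.
pose i0 := Ordinal hm.
have inDE (v : bool + 'I_m) : (v \in ~:[set inl true; inl false]) = (if v is inr _ then true else false).
  by case: v => [[]|i]; rewrite !inE.
apply/andP; split.
  apply/andP; split.
    apply/forallP => v; apply/implyP; rewrite inDE; case: v => // a _.
    by apply/exists_inP; exists (inr i0); rewrite ?inDE ?Rlr.
  apply/forall_inP => v; rewrite inDE; case: v => // i _.
  apply: ne1_intro => u; rewrite /ext_nbrs !inE; case: u => [a|j]; last by rewrite Rrr.
  move=> _; exists (inl (~~ a)); first by rewrite !inE Rrl /=; case: a.
  by case: a.
apply/forallP => D'; apply/implyP => pD; apply/negP => /andP [/forallP Hd _].
move: pD; rewrite properE => /andP [/subsetP sub /subsetPn [v vD vD']].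
have [u uD' Rvu] := exists_inP (implyP (Hd v) vD').
have := sub u uD'; clear Hd vD' uD' sub; move: vD Rvu; rewrite !inDE.
by case: v => // i _; case: u => // j; rewrite Rrr.
Qed.

Section Corona.
Variables (k : nat) (h : rel 'I_k) (s : 'I_k) (R : rel (option ('I_k + 'I_k))).
Hypothesis R1 : forall a, R None (Some (inl a)) = (a == s).
Hypothesis R2 : forall a, R (Some (inl a)) None = (a == s).
Hypothesis R3 : forall a, a != s -> R None (Some (inr a)) = false.
Hypothesis R4 : forall a, a != s -> R (Some (inr a)) None = false.
Hypothesis R5 : forall u v, R (Some u) (Some v) = corona h u v.
Hypothesis R6 : R None None = false.

Let D : {set option ('I_k + 'I_k)} := ~:[set None; Some (inr s)].
Lemma cD v : (v \in D) = (v != None) && (v != Some (inr s)).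
Proof. by rewrite !inE negb_or. Qed.
Lemma cD_inl a : Some (inl a) \in D. Proof. by rewrite cD. Qed.
Lemma cD_inr a : (Some (inr a) \in D) = (a != s).
Proof. by rewrite cD /=; congr (~~ _); apply/eqP/eqP => [[]|->]. Qed.
Lemma cnotD v : v \notin D -> v = None \/ v = Some (inr s).
Proof. by rewrite cD negb_and !negbK => /orP [] /eqP ->; [left | right]. Qed.

Lemma leaf_nbr a u : a != s -> R (Some (inr a)) u -> u = Some (inl a).
Proof.
move=> as0; case: u => [[b|b]|]; rewrite ?R5 //=; last by rewrite R4.
by move/eqP => ->.
Qed.

Lemma model_corona : minimal_certified_dominating R D.
Proof.
apply/andP; split.
  apply/andP; split.
    apply/forallP => v; apply/implyP => /cnotD [] ->; apply/exists_inP;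
    exists (Some (inl s)); rewrite ?cD_inl ?R1 ?R5 //=.
  apply/forall_inP => v; rewrite cD; case: v => [[a|a]|] //= vD.
    apply: ne1_intro => u; rewrite /ext_nbrs in_set => /andP [Ru /cnotD Hu].
    have as0 : a = s.
      case: Hu Ru => ->; rewrite ?R2 ?R5 //=; by move/eqP.
    rewrite as0 in Ru *.
    exists (if u == None then Some (inr s) else None).
      by case: eqP => _; rewrite !inE ?R2 ?R5 /= ?eqxx ?andbT.
    by case: Hu => ->.
  apply: ne1_intro => u; rewrite /ext_nbrs in_set => /andP [Ru /cnotD Hu].
  have as0 : a != s by apply: contra vD => /eqP ->.
  by move: Hu; rewrite (leaf_nbr as0 Ru); case.
apply/forallP => D'; apply/implyP => pD; apply/negP => /andP [/forallP Hd /forall_inP Hc].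
move: pD; rewrite properE => /andP [/subsetP sub /subsetPn [v vD vD']].
have notD'of w : w \notin D -> w \notin D' by move=> wD; apply: contra wD; apply: sub.
have claim a : Some (inl a) \in D'.
  apply/negPn/negP => aD'.
  case: (eqVneq a s) => [as0|as0].
    have ND : None \notin D' by apply: notD'of; rewrite cD.
    have [u uD' Ru] := exists_inP (implyP (Hd None) ND).
    move: uD' Ru; case: u => [[b|b]|] //.
    - by rewrite R1 => bD /eqP eb; move: aD'; rewrite as0 -eb bD.
    - case: (eqVneq b s) => [->|bs]; last by rewrite R3.
      by move=> /sub; rewrite cD_inr eqxx.
    - by move/sub; rewrite cD.
  case: (boolP (Some (inr a) \in D')) => wD'.
    have vE : Some (inl a) \in ext_nbrs R D' (Some (inr a)).
      by rewrite !inE aD' R5 /= eqxx.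
    have [u' u'E u'ne] := ne1_elim (Hc _ wD') vE.
    move: u'E; rewrite !inE => /andP [Ru' _].
    by rewrite (leaf_nbr as0 Ru') eqxx in u'ne.
  have [u uD' Ru] := exists_inP (implyP (Hd _) wD').
  by move: uD'; rewrite (leaf_nbr as0 Ru) (negbTE aD').
move: vD vD'; case: v => [[a|a]|] //; first by rewrite claim.
  rewrite cD_inr => as0 vD'.
  have [u uD' Ru] := exists_inP (implyP (Hd _) vD').
  rewrite (leaf_nbr as0 Ru) in uD'.
  have vE : Some (inr a) \in ext_nbrs R D' (Some (inl a)).
    by rewrite !inE vD' R5 /= eqxx.
  have [u' u'E u'ne] := ne1_elim (Hc _ uD') vE.
  move: u'E u'ne; rewrite !inE; case: u' => [[b|b]|] /=.
  - by rewrite claim andbF.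
  - by rewrite R5 /= => /andP [/eqP -> _]; rewrite eqxx.
  - by rewrite R2 (negbTE as0).
by rewrite cD.
Qed.
End Corona.

Theorem theorem3p3 (T : finType) (g : rel T) :
  simple_graph g -> connected_graph g -> 3 <= #|T| ->
  (Gamma_cer g = #|T| - 2 <->
     [\/ is_simple_diadem g, is_diadem g,
         isomorphic g (@K2_join_barK (#|T| - 2))
       | isomorphic g (@barK2_join_barK (#|T| - 2))]).
Proof.
move=> [gsym girr] gconn n3; rewrite (gamma_iff gsym n3); split.
  by case=> x [y [xy Hm]]; exact: (forward gsym girr gconn n3 xy Hm).
have m0 : 0 < #|T| - 2 by rewrite subn_gt0.
case=> [[k [h [s [_ [f [bf ef]]]]]] | [k [h [s [_ [f [bf ef]]]]]] | [f [bf ef]] | [f [bf ef]]];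
  apply: (transport bf ef).
- exists None, (Some (inr s)); split => //.
  apply: (@model_corona _ h s) => //.
  by move=> [a|a] [b|b].
- exists None, (Some (inr s)); split => //.
  apply: (@model_corona _ h s) => //; try by move=> a /negbTE.
  by move=> [a|a] [b|b].
- by apply: model_join.
- by apply: model_join.
Qed.
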